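(* Let $\mathcal V=\mathbb R^d$ with the Euclidean norm, and fix $r>0$ and an integer $\tau\ge0$. Consider linear losses $f_t(x)=\langle g_t,x\rangle$ with uniform delay $\tau$ ($\mathcal S_t=\{1,\dots,t-\tau-1\}$), and run DODA with guesses $\tilde g_{t+1/2}=g_{t-\tau-1}$ and constant learning rates $\eta,\gamma$, where $\eta=\eta(r,T,\tau,V^{\tau+1}_T)$ is uniquely determined by $r$, the horizon $T$, $\tau$ and $V^{\tau+1}_T$, and $\gamma\le\tau\eta$. Then it is impossible to guarantee a regret in $o(\max(V^{\tau+1}_T,\sqrt T))$: it is not true that for every $\varepsilon>0$ there exists $N$ such that, for every instance (horizon $T$, linear losses, initial point $x_1$, comparator $p$ with $\|p-x_1\|\le r$) with $\max(V^{\tau+1}_T,\sqrt T)\ge N$, the regret satisfies $R_T(p)\le\varepsilon\max(V^{\tau+1}_T,\sqrt T)$.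
   Context: DODA (unconstrained Euclidean): given $x_1$, $x_t=x_1-\eta\sum_{s\in\mathcal S_t}g_{s+1/2}$ and $x_{t+1/2}=x_t-\gamma\tilde g_{t+1/2}$; the played point at round $t$ is $x_{t+1/2}$, with feedback $g_{t+1/2}=\nabla f_t(x_{t+1/2})$, which for linear losses equals $g_t$. Regret: $R_T(p)=\sum_{t=1}^Tf_t(x_{t+1/2})-\sum_{t=1}^Tf_t(p)$. Convention $g_t=0$ for $t\le0$. $(\tau+1)$-variation: $V^{\tau+1}_T=\sum_{t=1}^T\|g_t-g_{t-\tau-1}\|^2$. *)

(* Defs.v *)
From HB Require Import structures.
From mathcomp Require Import all_boot all_order all_algebra.
From mathcomp Require Import reals.
Set Implicit Arguments. Unset Strict Implicit. Unset Printing Implicit Defensive.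
Import Order.TTheory GRing.Theory Num.Theory.
Local Open Scope ring_scope.

Section DODA.
Variables (R : realType) (d : nat).

Definition dotv (u v : 'rV[R]_d) : R := \sum_(i < d) u ord0 i * v ord0 i.
Definition normv (u : 'rV[R]_d) : R := Num.sqrt (dotv u u).

(* g_{t-k} with the convention g_s = 0 for s <= 0 (t >= 1, k = tau+1) *)
Definition gdel (tau : nat) (g : nat -> 'rV[R]_d) (t : nat) : 'rV[R]_d :=
  if (t <= tau.+1)%N then 0 else g (t - tau.+1)%N.

Definition doda_x (eta : R) (x1 : 'rV[R]_d) (g : nat -> 'rV[R]_d) (tau t : nat)
  : 'rV[R]_d := x1 - eta *: \sum_(1 <= s < t - tau) g s.

Definition doda_play (eta gamma : R) (x1 : 'rV[R]_d) (g : nat -> 'rV[R]_d)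
  (tau t : nat) : 'rV[R]_d :=
  doda_x eta x1 g tau t - gamma *: gdel tau g t.

Definition regret (T : nat) (eta gamma : R) (x1 : 'rV[R]_d)
  (g : nat -> 'rV[R]_d) (tau : nat) (p : 'rV[R]_d) : R :=
  \sum_(1 <= t < T.+1) dotv (g t) (doda_play eta gamma x1 g tau t)
  - \sum_(1 <= t < T.+1) dotv (g t) p.

Definition variation (T tau : nat) (g : nat -> 'rV[R]_d) : R :=
  \sum_(1 <= t < T.+1) normv (g t - gdel tau g t) ^+ 2.

End DODA.

(* Main.v *)
Require Import Defs.
From HB Require Import structures.
From mathcomp Require Import all_boot all_order all_algebra.
From mathcomp Require Import reals.
From mathcomp Require Import ring lra zify.
Import Order.TTheory GRing.Theory Num.Theory.
Set Implicit Arguments. Unset Strict Implicit.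
Local Open Scope ring_scope.
Section Scalar.
Variable R : realType.
Implicit Types (a : nat -> R).

Definition P a k := \sum_(1 <= s < k) a s.

Lemma sum_id a T : 2 * \sum_(1 <= t < T.+1) a t * P a t =
  P a T.+1 ^+ 2 - \sum_(1 <= t < T.+1) a t ^+ 2.
Proof.
elim: T => [|T IH]; first by rewrite /P !big_geq // mulr0 expr0n /= subr0.
rewrite !(@big_nat_recr _ _ _ T.+1 1) //=. rewrite /P (@big_nat_recr _ _ _ T.+1 1) //=. rewrite mulrDr; rewrite /P in IH; rewrite IH; ring.
Qed.

Lemma key a T (eta gamma : R) (tau : nat) : a 0%N = 0 -> 0 <= eta -> 0 <= gamma ->
  gamma <= tau%:R * eta ->
  (forall t, (1 <= t <= T)%N -> 0 <= a t * a (t - tau.+1)%N) ->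
  (forall t s, (1 <= t <= T)%N -> (1 <= s)%N -> (s < t)%N -> (t <= s + tau)%N ->
      a t * a (t - tau.+1)%N <= a t * a s) ->
  - eta * ((P a T.+1 ^+ 2 - \sum_(1 <= t < T.+1) a t ^+ 2) / 2) <=
  \sum_(1 <= t < T.+1) - (a t * (eta * \sum_(1 <= s < t - tau) a s + gamma * a (t - tau.+1)%N)).
Proof.
move=> a0 he hg hgt H1 H2.
have -> : - eta * ((P a T.+1 ^+ 2 - \sum_(1 <= t < T.+1) a t ^+ 2) / 2) =
   \sum_(1 <= t < T.+1) - eta * (a t * P a t).
  by rewrite -sum_id -mulr_sumr; field.
apply: ler_sum_nat => t /andP [t1 tT].
have htT : (1 <= t <= T)%N by apply/andP; split => //.
case: (leqP t tau) => htau.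
- have -> : (t - tau = 0)%N by apply/eqP; rewrite subn_eq0.
  have -> : (t - tau.+1 = 0)%N by apply/eqP; rewrite subn_eq0 ltnW // ltnS.
  rewrite big_geq // a0 !(mulr0, addr0, oppr0).
  rewrite mulNr oppr_le0 mulr_ge0 // /P mulr_sumr big_nat_cond sumr_ge0 // => s /andP [/andP [s1 st] _].
  have := H2 t s htT s1 st; have -> : (t - tau.+1 = 0)%N by lia.
  rewrite a0 mulr0; apply; lia.
- have -> : P a t = \sum_(1 <= s < t - tau) a s + \sum_(t - tau <= s < t) a s.
    rewrite /P (big_cat_nat (n := (t - tau)%N)) //; lia.
  have hs : tau%:R * (a t * a (t - tau.+1)%N) <= a t * \sum_(t - tau <= s < t) a s.
    have -> : tau%:R * (a t * a (t - tau.+1)%N) = \sum_(t - tau <= s < t) (a t * a (t - tau.+1)%N).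
      rewrite sumr_const_nat mulr_natl; congr (_ *+ _); lia.
    rewrite mulr_sumr; apply: ler_sum_nat => s /andP [s1 s2]; apply: H2 => //; lia.
  have h1 := H1 t htT.
  set x := a t * a (t - tau.+1)%N in hs h1 *.
  set W := \sum_(t - tau <= s < t) a s in hs *.
  set A := \sum_(1 <= s < t - tau) a s.
  have : gamma * x <= eta * (tau%:R * x).
    rewrite mulrA [eta * _]mulrC; exact: ler_wpM2r.
  move=> hx.
  have h3 : eta * (tau%:R * x) <= eta * (a t * W) by apply: ler_wpM2l.
  have -> : - (a t * (eta * A + gamma * a (t - tau.+1)%N)) = - eta * (a t * A) - gamma * x.
    by rewrite /x; ring.
  rewrite mulrDr mulrDr; lra.
Qed.


Lemma sum_const_on (f : nat -> R) lo hi c :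
  (forall t, (lo <= t < hi)%N -> f t = c) -> \sum_(lo <= t < hi) f t = c *+ (hi - lo).
Proof. by move=> h; rewrite -sumr_const_nat; apply: eq_big_nat. Qed.

Lemma sp (n lo hi : nat) (f : nat -> R) : (lo <= n)%N -> (n <= hi)%N ->
  \sum_(lo <= i < hi) f i = \sum_(lo <= i < n) f i + \sum_(n <= i < hi) f i.
Proof. by move=> h1 h2; rewrite (big_cat_nat h1 h2). Qed.

Definition blk (L k m : nat) (u w : R) (t : nat) : R :=
  if (1 <= t)%N && (t <= k)%N then u
  else if (k + L < t)%N && (t <= k + L + m)%N then w else 0.

Ltac bsplit := rewrite /blk; repeat (case: ifP => /=; move/idP => ?).

Ltac bsolve := bsplit; first [lia | ring | nra].

Section Blk.
Variables (L k m : nat) (u w : R).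
Local Notation b := (blk L k m u w).

Lemma blk0 : b 0%N = 0.
Proof. by rewrite /blk. Qed.

Lemma blk_sum : \sum_(1 <= t < (k + L + m).+1) b t = u *+ k + w *+ m.
Proof.
rewrite (@sp k.+1 1); try lia.
rewrite (@sp (k + L).+1 k.+1); try lia.
rewrite (@sum_const_on _ _ _ u); last by move=> t /andP[? ?]; bsolve.
rewrite (@sum_const_on _ _ _ 0); last by move=> t /andP[? ?]; bsolve.
rewrite (@sum_const_on _ _ _ w); last by move=> t /andP[? ?]; bsolve.
rewrite mul0rn add0r; congr (_ *+ _ + _ *+ _); lia.
Qed.

Lemma blk_sq : \sum_(1 <= t < (k + L + m).+1) b t ^+ 2 = u ^+ 2 *+ k + w ^+ 2 *+ m.
Proof.
rewrite (@sp k.+1 1); try lia.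
rewrite (@sp (k + L).+1 k.+1); try lia.
rewrite (@sum_const_on _ _ _ (u ^+ 2)); last by move=> t /andP[? ?]; bsolve.
rewrite (@sum_const_on _ _ _ 0); last by move=> t /andP[? ?]; bsolve.
rewrite (@sum_const_on _ _ _ (w ^+ 2)); last by move=> t /andP[? ?]; bsolve.
rewrite mul0rn add0r; congr (_ *+ _ + _ *+ _); lia.
Qed.

Lemma blk_var : (L <= k)%N -> (L <= m)%N ->
  \sum_(1 <= t < (k + L + m).+1) (b t - b (t - L)%N) ^+ 2 = (u ^+ 2 *+ 2 + w ^+ 2) *+ L.
Proof.
move=> hk hm.
rewrite (@sp L.+1 1); try lia.
rewrite (@sp k.+1 L.+1); try lia.
rewrite (@sp (k + L).+1 k.+1); try lia.
rewrite (@sp (k + L + L).+1 (k + L).+1); try lia.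
rewrite (@sum_const_on _ 1 _ (u ^+ 2)); last by move=> t /andP[? ?]; bsolve.
rewrite (@sum_const_on _ L.+1 _ 0); last by move=> t /andP[? ?]; bsolve.
rewrite (@sum_const_on _ k.+1 _ (u ^+ 2)); last by move=> t /andP[? ?]; bsolve.
rewrite (@sum_const_on _ (k + L).+1 _ (w ^+ 2)); last by move=> t /andP[? ?]; bsolve.
rewrite (@sum_const_on _ (k + L + L).+1 _ 0); last by move=> t /andP[? ?]; bsolve.
rewrite !mul0rn !add0r.
have -> : ((k + L).+1 - k.+1 = L)%N by lia.
have -> : ((k + L + L).+1 - (k + L).+1 = L)%N by lia.
have -> : (L.+1 - 1 = L)%N by lia.
rewrite !mulrnDl -mulr2n; ring.
Qed.
End Blk.

Section BlkH.
Variables (tau k m : nat) (u w : R).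
Local Notation b := (blk tau.+1 k m u w).

Lemma blk_H1 t : 0 <= b t * b (t - tau.+1)%N.
Proof. bsolve. Qed.

Lemma blk_H2 t s : (1 <= s)%N -> (s < t)%N -> (t <= s + tau)%N ->
      b t * b (t - tau.+1)%N <= b t * b s.
Proof. move=> h1 h2 h3; bsolve. Qed.
End BlkH.
End Scalar.
Section Vec.
Variables (R : realType) (d : nat) (i0 : 'I_d).
Let e : 'rV[R]_d := delta_mx 0 i0.

Lemma dot_e (x y : R) : dotv (x *: e) (y *: e) = x * y.
Proof.
rewrite /dotv (bigD1 i0) //= big1 => [|i /negbTE hi]; rewrite !mxE ?eqxx ?hi /=.
  by rewrite addr0; ring.
by rewrite !mulr0.
Qed.

Lemma norm_e (x : R) : normv (x *: e) = `|x|.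
Proof. by rewrite /normv dot_e -expr2 sqrtr_sqr. Qed.

Variables (a : nat -> R) (tau : nat).
Hypothesis a0 : a 0%N = 0.
Let g t := a t *: e.

Lemma gdel_e t : gdel tau g t = a (t - tau.+1)%N *: e.
Proof.
rewrite /gdel; case: ifP => h; last by [].
have -> : (t - tau.+1 = 0)%N by lia.
by rewrite a0 scale0r.
Qed.

Lemma play_e (eta gamma : R) t : doda_play eta gamma 0 g tau t =
  (- (eta * \sum_(1 <= s < t - tau) a s + gamma * a (t - tau.+1)%N)) *: e.
Proof.
rewrite /doda_play /doda_x gdel_e /g -scaler_suml !scalerA sub0r -scaleNr -scalerBl.
congr (_ *: _); ring.
Qed.

Lemma regret_e T (eta gamma rho : R) : regret T eta gamma 0 g tau ((- rho) *: e) =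
  \sum_(1 <= t < T.+1) - (a t * (eta * \sum_(1 <= s < t - tau) a s + gamma * a (t - tau.+1)%N))
  + rho * \sum_(1 <= t < T.+1) a t.
Proof.
rewrite /regret; congr (_ + _).
  by apply: eq_bigr => t _; rewrite play_e dot_e /g; ring.
rewrite -sumrN mulr_sumr; apply: eq_bigr => t _; rewrite dot_e; ring.
Qed.

Lemma var_e T : variation T tau g = \sum_(1 <= t < T.+1) (a t - a (t - tau.+1)%N) ^+ 2.
Proof.
apply: eq_bigr => t _; rewrite gdel_e /g -scalerBl norm_e; exact: real_normK (num_real _).
Qed.
End Vec.
Theorem theorem6 (R : realType) (d : nat) (r : R) (tau : nat)
  (eta gamma : R -> nat -> nat -> R -> R) :
  (0 < d)%N -> 0 < r ->
  (forall (T : nat) (V : R), 0 <= V ->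
     0 < eta r T tau V /\ 0 <= gamma r T tau V /\
     gamma r T tau V <= tau%:R * eta r T tau V) ->
  ~ (forall eps : R, 0 < eps -> exists N : R,
       forall (T : nat) (g : nat -> 'rV[R]_d) (x1 p : 'rV[R]_d),
         normv (p - x1) <= r ->
         N <= Num.max (variation T tau g) (Num.sqrt T%:R) ->
         regret T (eta r T tau (variation T tau g))
                  (gamma r T tau (variation T tau g)) x1 g tau p
         <= eps * Num.max (variation T tau g) (Num.sqrt T%:R)).
Proof.
move=> hd hr hpar Hall.
pose i0 : 'I_d := Ordinal hd.
pose e : 'rV[R]_d := delta_mx 0 i0.
have [N HN] := Hall (r / 8) (divr_gt0 hr (ltr0n _ 8)).
pose q := (12 * tau.+1 + Num.trunc N).+1%N.
have hqN : N <= q%:R.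
  apply: le_trans (ltW (truncnS_gt N)) _; rewrite ler_nat /q ltnS leq_addl //=.
have hqL : (12 * tau.+1 < q)%N by rewrite /q; lia.
clearbody q.
pose T := (q * q + tau.+1 + q * q)%N.
pose V0 : R := 12 * tau.+1%:R.
have hV0 : 0 <= V0 by rewrite /V0 mulr_ge0 // ler0n.
pose et := eta r T tau V0; pose gm := gamma r T tau V0.
have [he [hg hgt]] := hpar T V0 hV0.
have hsq : Num.sqrt (T%:R : R) <= 2 * q%:R.
  have -> : 2 * q%:R = Num.sqrt ((2 * q%:R) ^+ 2) :> R.
    by rewrite sqrtr_sqr ger0_norm // mulr_ge0 ?ler0n.
  rewrite ler_sqrt; last by apply: sqr_ge0.
  rewrite -natrM -natrX ler_nat /T; nia.
have hqsq : q%:R <= Num.sqrt (T%:R : R).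
  have -> : q%:R = Num.sqrt (q%:R ^+ 2) :> R by rewrite sqrtr_sqr ger0_norm.
  rewrite ler_sqrt ?ler0n // -natrX ler_nat /T; nia.
have hMup : Num.max V0 (Num.sqrt T%:R) <= 2 * q%:R.
  rewrite ge_max hsq andbT /V0.
  have : ((12 * tau.+1)%:R <= (2 * q)%:R :> R) by rewrite ler_nat; lia.
  by rewrite !natrM.
have hMlo : N <= Num.max V0 (Num.sqrt T%:R).
  by rewrite le_max; apply/orP; right; exact: le_trans hqN hqsq.
have hLk : (tau.+1 <= q * q)%N by nia.
pose aX := blk tau.+1 (q * q) (q * q) (2 : R) (-2).
have HX := HN T (fun t => aX t *: e) 0 ((- 0) *: e).
rewrite subr0 norm_e normrN normr0 var_e /aX ?blk0 // blk_var // in HX.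
have eV0 : ((2 : R) ^+ 2 *+ 2 + (-2) ^+ 2) *+ tau.+1 = V0 by rewrite /V0; ring.
rewrite eV0 -/et -/gm in HX.
have {HX} HX := HX (ltW hr) hMlo.
rewrite regret_e ?blk0 // mul0r addr0 in HX.
have kX := @key R aX T et gm tau (blk0 _ _ _ _ _) (ltW he) hg hgt
   (fun t _ => blk_H1 _ _ _ _ _ t) (fun t s _ => @blk_H2 _ _ _ _ _ _ t s).
rewrite /P /aX blk_sum blk_sq in kX.
have lX : et * (4 * (q%:R * q%:R)) <= r / 8 * (2 * q%:R).
  have h1 : r / 8 * Num.max V0 (Num.sqrt (T%:R : R)) <= r / 8 * (2 * q%:R).
    by apply: ler_wpM2l => //; lra.
  apply: le_trans (le_trans (le_trans kX HX) h1).
  rewrite -natrM le_eqVlt; apply/orP; left; apply/eqP.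
  rewrite (_ : (_ - _) = - (4 * (q * q)%:R) * 2); last by ring.
  by rewrite mulfK ?pnatr_eq0 // mulrNN.
clear HX kX.
have [c [hc2 [hc0 hc]]] : exists c : R, c ^+ 2 = 6 /\ 0 <= c /\ 2 <= c.
  exists (Num.sqrt 6); split; first by rewrite sqr_sqrtr.
  split; first by rewrite sqrtr_ge0.
  rewrite (_ : 2 = Num.sqrt (2 ^+ 2)); last by rewrite sqrtr_sqr ger0_norm.
  rewrite ler_sqrt //; lra.
have hq0 : (0 < q)%N by apply: leq_ltn_trans hqL.
have hqq : (q <= q * q)%N by rewrite leq_pmulr.
have hT : T = (q + tau.+1 + (q * q + q * q - q))%N.
  rewrite /T; clear - hqq; lia.
pose aY := blk tau.+1 q (q * q + q * q - q) c 0.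
have HY := HN T (fun t => aY t *: e) 0 ((- r) *: e).
rewrite subr0 norm_e normrN (ger0_norm (ltW hr)) in HY.
rewrite var_e in HY; last by rewrite /aY blk0.
have eVY : \sum_(1 <= t < T.+1) (blk tau.+1 q (q * q + q * q - q) c 0 t -
    blk tau.+1 q (q * q + q * q - q) c 0 (t - tau.+1)) ^+ 2 = V0.
  rewrite hT blk_var; last (clear - hqq hqL; lia); last (clear - hqL; lia).
  by rewrite hc2 /V0; ring.
rewrite eVY -/et -/gm in HY.
have {HY} HY := HY (lexx r) hMlo.
rewrite regret_e ?blk0 // in HY.
have kY := @key R aY T et gm tau (blk0 _ _ _ _ _) (ltW he) hg hgt
   (fun t _ => blk_H1 _ _ _ _ _ t) (fun t s _ => @blk_H2 _ _ _ _ _ _ t s).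
rewrite /P /aY hT blk_sum blk_sq -hT in kY.
rewrite hT blk_sum -hT in HY.
have eS : c *+ q + 0 *+ (q * q + q * q - q) = c * q%:R by rewrite mul0rn addr0 mulr_natr.
have eQ : c ^+ 2 *+ q + 0 ^+ 2 *+ (q * q + q * q - q) = 6 * q%:R.
  by rewrite expr0n mul0rn addr0 hc2 mulr_natr.
rewrite eS eQ in kY; rewrite eS in HY.
have eK : - et * (((c * q%:R) ^+ 2 - 6 * q%:R) / 2) =
    - (3 * (et * (q%:R * q%:R))) + 3 * (et * q%:R).
  rewrite exprMn hc2 (_ : (6 * q%:R ^+ 2 - 6 * q%:R) = (3 * (q%:R * q%:R) - 3 * q%:R) * 2).
    by rewrite mulfK ?pnatr_eq0 //; ring.
  by ring.
rewrite eK in kY.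
have h1 : r / 8 * Num.max V0 (Num.sqrt (T%:R : R)) <= r / 8 * (2 * q%:R).
  by apply: ler_wpM2l => //; lra.
have lY := le_trans (lerD kY (lexx (r * (c * q%:R)))) (le_trans HY h1).
have hq : 0 < q%:R :> R by rewrite ltr0n.
have p2 : 2 * (r * q%:R) <= r * (c * q%:R).
  rewrite (_ : r * (c * q%:R) = c * (r * q%:R)); last by ring.
  by apply: ler_wpM2r => //; rewrite mulr_ge0 // ltW.
have p3 : 0 <= et * q%:R by rewrite mulr_ge0 // ltW.
have p4 : 0 < r * q%:R by rewrite mulr_gt0.
have p5 : et * (4 * (q%:R * q%:R)) = 4 * (et * (q%:R * q%:R)) by ring.
rewrite p5 in lX.
move: lX lY p2 p3 p4 hr; clear.
set A := et * (q%:R * q%:R); set B := et * q%:R; set C := r * (c * q%:R); set D := r * q%:R.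
rewrite (_ : r / 8 * (2 * q%:R) = D / 4); last by rewrite /D; field.
move=> *; lra.
Qed.
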